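(* Let $S$ be a set of anchored rectangles in the plane. Then it is possible to maintain a conflict-free coloring of $S$ (with respect to points) under insertions and deletions of rectangles that uses $O(\log n)$ colors and performs $O(\log n)$ recolorings per insertion and per deletion, where $n$ is the current number of rectangles in $S$.
   Context: A rectangle is anchored if its bottom-left vertex lies at the origin. A coloring of a set $S$ of regions is conflict-free (with respect to points) if for every point $q$ lying in at least one region of $S$, among the regions of $S$ containing $q$ there is one whose color is unique among them. A recoloring is a change of the color of one object already in the set; the number of recolorings per update is the number of objects whose color changes. *)

(* Defs.v *)
From Stdlib Require Import Reals List Arith.
Import ListNotations.
Open Scope R_scope.

(* An anchored rectangle [0,rx] x [0,ry], identified by its top-right corner. *)
Record rect := Rect { rx : R; ry : R }.

Definition valid_rect (r : rect) : Prop := 0 < rx r /\ 0 < ry r.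

Definition contains (r : rect) (q : R * R) : Prop :=
  0 <= fst q <= rx r /\ 0 <= snd q <= ry r.

Definition rect_eq_dec (r1 r2 : rect) : {r1 = r2} + {r1 <> r2}.
Proof.
  destruct r1 as [a b], r2 as [c d].
  destruct (Req_EM_T a c) as [H1|H1]; [destruct (Req_EM_T b d) as [H2|H2]|].
  - left; subst; reflexivity.
  - right; intro H; inversion H; contradiction.
  - right; intro H; inversion H; contradiction.
Defined.

Definition conflict_free (S : list rect) (col : rect -> nat) : Prop :=
  forall q : R * R,
    (exists r, In r S /\ contains r q) ->
    exists r, In r S /\ contains r q /\
      forall r', In r' S -> contains r' q -> r' <> r -> col r' <> col r.

Definition num_colors (S : list rect) (col : rect -> nat) : nat :=
  length (nodup Nat.eq_dec (map col S)).

Definition recolorings (S S' : list rect) (col col' : rect -> nat) : nat :=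
  length (filter (fun r => if in_dec rect_eq_dec r S'
                           then negb (Nat.eqb (col r) (col' r)) else false) S).

Inductive update := Ins (r : rect) | Del (r : rect).

Definition step (S : list rect) (u : update) : list rect :=
  match u with
  | Ins r => r :: S
  | Del r => remove rect_eq_dec r S
  end.

Definition cur (h : list update) : list rect := fold_left step h [].

Definition legal (S : list rect) (u : update) : Prop :=
  match u with
  | Ins r => valid_rect r /\ ~ In r S
  | Del r => In r S
  end.

Inductive valid_hist : list update -> Prop :=
| vh_nil : valid_hist []
| vh_snoc : forall h u, valid_hist h -> legal (cur h) u -> valid_hist (h ++ [u]).

(* Main.v *)
Require Import Defs.
From Stdlib Require Import Reals List Arith Lia Lra Permutation Classical.
Import ListNotations.
Open Scope R_scope.

Inductive tr := Lf (p : rect) | Nd (l r : tr).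

Fixpoint ht (t : tr) : nat := match t with Lf _ => 0%nat | Nd l r => S (Nat.max (ht l) (ht r)) end.
Lemma ht_Nd l r : ht (Nd l r) = S (Nat.max (ht l) (ht r)). Proof. reflexivity. Qed.
Lemma ht_Lf p : ht (Lf p) = 0%nat. Proof. reflexivity. Qed.
Arguments ht : simpl never.
Fixpoint leaves (t : tr) : list rect := match t with Lf p => [p] | Nd l r => leaves l ++ leaves r end.
Fixpoint avl (t : tr) : Prop := match t with Lf _ => True
  | Nd l r => avl l /\ avl r /\ (ht l <= S (ht r))%nat /\ (ht r <= S (ht l))%nat end.
Fixpoint top (t : tr) : rect := match t with Lf p => p
  | Nd l r => if Rle_dec (ry (top l)) (ry (top r)) then top r else top l end.
Fixpoint lastleaf (t : tr) : rect := match t with Lf p => p | Nd l r => lastleaf r end.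
Fixpoint M (t : tr) : list (rect * nat) := match t with Lf _ => []
  | Nd l r => (top r, ht (Nd l r)) :: M l ++ M r end.
Fixpoint col (t : tr) (p : rect) : nat := match t with Lf _ => 0%nat
  | Nd l r => if rect_eq_dec p (top r) then ht (Nd l r) else Nat.max (col l p) (col r p) end.

Definition bal (l r : tr) : tr :=
  if Nat.ltb (S (ht r)) (ht l) then
    match l with
    | Nd ll lr => if Nat.leb (ht lr) (ht ll) then Nd ll (Nd lr r)
                  else match lr with
                       | Nd lrl lrr => Nd (Nd ll lrl) (Nd lrr r)
                       | Lf _ => Nd l r end
    | Lf _ => Nd l r end
  else if Nat.ltb (S (ht l)) (ht r) then
    match r with
    | Nd rl rr => if Nat.leb (ht rl) (ht rr) then Nd (Nd l rl) rr
                  else match rl with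
                       | Nd rll rlr => Nd (Nd l rll) (Nd rlr rr)
                       | Lf _ => Nd l r end
    | Lf _ => Nd l r end
  else Nd l r.

Lemma bal_leaves l r : leaves (bal l r) = leaves l ++ leaves r.
Proof.
  unfold bal.
  destruct (Nat.ltb _ _).
  - destruct l as [|ll lr]; simpl; auto.
    destruct (Nat.leb _ _); simpl; [now rewrite app_assoc|].
    destruct lr; simpl; auto. now rewrite !app_assoc.
  - destruct (Nat.ltb _ _); auto.
    destruct r as [|rl rr]; simpl; auto.
    destruct (Nat.leb _ _); simpl; [now rewrite app_assoc|].
    destruct rl; simpl; auto. now rewrite !app_assoc.
Qed.

Lemma bal_avl l r : avl l -> avl r -> (ht l <= ht r + 2)%nat -> (ht r <= ht l + 2)%nat ->
  avl (bal l r) /\ (Nat.max (ht l) (ht r) <= ht (bal l r) <= S (Nat.max (ht l) (ht r)))%nat /\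
  ((ht l <= S (ht r))%nat -> (ht r <= S (ht l))%nat -> ht (bal l r) = S (Nat.max (ht l) (ht r))).
Proof.
  intros Hl Hr H1 H2. unfold bal.
  destruct (Nat.ltb_spec (S (ht r)) (ht l)).
  - destruct l as [p|ll lr]; cbn [avl] in *; rewrite ?ht_Nd, ?ht_Lf in *; [lia|].
    destruct Hl as (Hll & Hlr & A1 & A2).
    destruct (Nat.leb_spec (ht lr) (ht ll)).
    + cbn [avl]; rewrite ?ht_Nd, ?ht_Lf in *. repeat split; auto; lia.
    + destruct lr as [p|lrl lrr]; cbn [avl] in *; rewrite ?ht_Nd, ?ht_Lf in *; [lia|].
      destruct Hlr as (B0 & B1 & B2 & B3).
      cbn [avl]; rewrite ?ht_Nd, ?ht_Lf in *. repeat split; auto; lia.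
  - destruct (Nat.ltb_spec (S (ht l)) (ht r)).
    + destruct r as [p|rl rr]; cbn [avl] in *; rewrite ?ht_Nd, ?ht_Lf in *; [lia|].
      destruct Hr as (Hrl & Hrr & A1 & A2).
      destruct (Nat.leb_spec (ht rl) (ht rr)).
      * cbn [avl]; rewrite ?ht_Nd, ?ht_Lf in *. repeat split; auto; lia.
      * destruct rl as [p|rll rlr]; cbn [avl] in *; rewrite ?ht_Nd, ?ht_Lf in *; [lia|].
        destruct Hrl as (B0 & B1 & B2 & B3).
        cbn [avl]; rewrite ?ht_Nd, ?ht_Lf in *. repeat split; auto; lia.
    + cbn [avl]; rewrite ?ht_Nd, ?ht_Lf in *. repeat split; auto; lia.
Qed.

Definition Ext (k : nat) (A B : list (rect * nat)) : Prop :=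
  exists E, (length E <= k)%nat /\ incl A (E ++ B).

Lemma Ext_weaken k k' A B : (k <= k')%nat -> Ext k A B -> Ext k' A B.
Proof. intros H [E [H1 H2]]. exists E. split; auto; lia. Qed.

Lemma Ext_incl A B : incl A B -> Ext 0 A B.
Proof. intros H. exists []. simpl. auto. Qed.

Lemma Ext_trans k m A B C : Ext k A B -> Ext m B C -> Ext (k + m) A C.
Proof.
  intros [E [H1 H2]] [F [H3 H4]]. exists (E ++ F). split.
  - rewrite length_app. lia.
  - intros x Hx. apply H2 in Hx. rewrite !in_app_iff in *. destruct Hx as [Hx|Hx]; auto.
    apply H4 in Hx. rewrite in_app_iff in Hx. tauto.
Qed.

Lemma Ext_app k m A B C D : Ext k A B -> Ext m C D -> Ext (k + m) (A ++ C) (B ++ D).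
Proof.
  intros [E [H1 H2]] [F [H3 H4]]. exists (E ++ F). split.
  - rewrite length_app. lia.
  - intros x Hx. rewrite !in_app_iff in *. destruct Hx as [Hx|Hx].
    + apply H2 in Hx. rewrite in_app_iff in Hx. tauto.
    + apply H4 in Hx. rewrite in_app_iff in Hx. tauto.
Qed.

Ltac inclsolve := intros ?x ?Hx; simpl in *; rewrite ?in_app_iff in *; simpl in *; rewrite ?in_app_iff in *; tauto.

Lemma bal_ext l r : Ext 3 (M (bal l r)) (M l ++ M r) /\ Ext 3 (M l ++ M r) (M (bal l r)).
Proof.
  unfold bal.
  destruct (Nat.ltb _ _).
  - destruct l as [p|ll lr].
    + split; [exists [(top r, ht (Nd (Lf p) r))]| exists []]; split; simpl; try lia; inclsolve.
    + destruct (Nat.leb _ _).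
      * split; [exists [(top (Nd lr r), ht (Nd ll (Nd lr r))); (top r, ht (Nd lr r))]
               | exists [(top lr, ht (Nd ll lr))]]; split; simpl; try lia; inclsolve.
      * destruct lr as [q|lrl lrr].
        -- split; [exists [(top r, ht (Nd (Nd ll (Lf q)) r))]| exists []]; split; simpl; try lia; inclsolve.
        -- split; [exists [(top (Nd lrr r), ht (Nd (Nd ll lrl) (Nd lrr r))); (top lrl, ht (Nd ll lrl)); (top r, ht (Nd lrr r))]
                  | exists [(top (Nd lrl lrr), ht (Nd ll (Nd lrl lrr))); (top lrr, ht (Nd lrl lrr))]]; split; simpl; try lia; inclsolve.
  - destruct (Nat.ltb _ _).
    + destruct r as [p|rl rr].
      * split; [exists [(top (Lf p), ht (Nd l (Lf p)))]| exists []]; split; simpl; try lia; inclsolve.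
      * destruct (Nat.leb _ _).
        -- split; [exists [(top rr, ht (Nd (Nd l rl) rr)); (top rl, ht (Nd l rl))]
                  | exists [(top rr, ht (Nd rl rr))]]; split; simpl; try lia; inclsolve.
        -- destruct rl as [q|rll rlr].
           ++ split; [exists [(top (Nd (Lf q) rr), ht (Nd l (Nd (Lf q) rr)))]| exists []]; split; simpl; try lia; inclsolve.
           ++ split; [exists [(top (Nd rlr rr), ht (Nd (Nd l rll) (Nd rlr rr))); (top rll, ht (Nd l rll)); (top rr, ht (Nd rlr rr))]
                     | exists [(top (Nd (Nd rll rlr) rr), ht (Nd l (Nd (Nd rll rlr) rr))); (top rr, ht (Nd (Nd rll rlr) rr)); (top rlr, ht (Nd rll rlr))]]; split; simpl; try lia; inclsolve.
    + split; [exists [(top r, ht (Nd l r))]| exists []]; split; simpl; try lia; inclsolve.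
Qed.

Lemma top_in t : In (top t) (leaves t).
Proof.
  induction t; simpl; auto. destruct (Rle_dec _ _); rewrite in_app_iff; auto.
Qed.

Lemma top_max t w : In w (leaves t) -> ry w <= ry (top t).
Proof.
  induction t; simpl; intros H.
  - destruct H as [->|[]]. lra.
  - rewrite in_app_iff in H. destruct (Rle_dec _ _); destruct H as [H|H];
    [apply IHt1 in H; lra | auto | auto | apply IHt2 in H; lra].
Qed.

Lemma lastleaf_in t : In (lastleaf t) (leaves t).
Proof. induction t; simpl; auto. rewrite in_app_iff; auto. Qed.

Lemma M_fst t e : In e (M t) -> In (fst e) (leaves t).
Proof.
  induction t; simpl; intros H; [destruct H|].
  rewrite in_app_iff. destruct H as [<-|H]; [simpl; right; apply top_in|].
  rewrite in_app_iff in H. destruct H; auto.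
Qed.

Lemma M_snd t e : In e (M t) -> (snd e <= ht t)%nat.
Proof.
  induction t; simpl; intros H; [destruct H|]. rewrite ht_Nd.
  destruct H as [<-|H]; [simpl; rewrite ht_Nd; lia|].
  rewrite in_app_iff in H. destruct H as [H|H]; [apply IHt1 in H| apply IHt2 in H]; lia.
Qed.

Lemma col_le t p : (col t p <= ht t)%nat.
Proof.
  induction t; simpl. rewrite ht_Lf; lia. destruct (rect_eq_dec _ _); rewrite ht_Nd; lia.
Qed.

Lemma col_notin t p : ~ In p (leaves t) -> col t p = 0%nat.
Proof.
  induction t; simpl; intros H; auto.
  rewrite in_app_iff in H. destruct (rect_eq_dec p (top t2)).
  - subst. exfalso. apply H. right. apply top_in.
  - rewrite IHt1, IHt2; auto.
Qed.

Lemma col_pos_in t p : (0 < col t p)%nat -> In (p, col t p) (M t).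
Proof.
  induction t; simpl; intros H; [lia|].
  destruct (rect_eq_dec p (top t2)).
  - subst. left. reflexivity.
  - right. rewrite in_app_iff. destruct (Nat.max_spec (col t1 p) (col t2 p)) as [[A B]|[A B]];
    rewrite B in *; auto.
Qed.

Lemma in_M_le t p h : In (p, h) (M t) -> (h <= col t p)%nat.
Proof.
  induction t; simpl; intros H; [destruct H|].
  destruct H as [H|H].
  - inversion H; subst. destruct (rect_eq_dec _ _); [lia|congruence].
  - rewrite in_app_iff in H. destruct (rect_eq_dec p (top t2)).
    + destruct H as [H|H]; apply M_snd in H; simpl in H; rewrite ht_Nd; lia.
    + destruct H as [H|H]; [apply IHt1 in H| apply IHt2 in H]; lia.
Qed.

Lemma col_diff t t' p : col t p <> col t' p ->
  exists h, (In (p,h) (M t) /\ ~ In (p,h) (M t')) \/ (In (p,h) (M t') /\ ~ In (p,h) (M t)).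
Proof.
  intros H. destruct (Nat.lt_total (col t p) (col t' p)) as [L|[L|L]]; [|congruence|].
  - exists (col t' p). right. split. apply col_pos_in; lia.
    intros Hin. apply in_M_le in Hin. lia.
  - exists (col t p). left. split. apply col_pos_in; lia.
    intros Hin. apply in_M_le in Hin. lia.
Qed.

Fixpoint ss (l : list rect) : Prop := match l with [] => True
  | a :: l' => (forall b, In b l' -> rx a <= rx b) /\ ss l' end.

Lemma ss_app A B : ss (A ++ B) <-> ss A /\ ss B /\ (forall a b, In a A -> In b B -> rx a <= rx b).
Proof.
  induction A; simpl.
  - intuition.
  - rewrite IHA. split.
    + intros [H1 [H2 [H3 H4]]]. repeat split; auto.
      * intros b Hb. apply H1. rewrite in_app_iff; auto.
      * intros x b [<-|Hx] Hb; auto. apply H1. rewrite in_app_iff; auto.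
    + intros [[H1 H2] [H3 H4]]. repeat split; auto.
      intros b Hb. rewrite in_app_iff in Hb. destruct Hb; auto.
Qed.

Lemma ss_last t a : ss (leaves t) -> In a (leaves t) -> rx a <= rx (lastleaf t).
Proof.
  induction t; simpl; intros S H.
  - destruct H as [->|[]]; lra.
  - apply ss_app in S. destruct S as (S1 & S2 & S3). rewrite in_app_iff in H.
    destruct H; auto. apply S3; auto. apply lastleaf_in.
Qed.

Lemma ss_remove x l : ss l -> ss (remove rect_eq_dec x l).
Proof.
  induction l; simpl; auto. intros [H1 H2].
  destruct (rect_eq_dec x a); auto. simpl. split; auto.
  intros b Hb. apply in_remove in Hb. apply H1, Hb.
Qed.

Fixpoint ins (z : rect) (t : tr) : tr :=
  match t with
  | Lf p => if Rle_dec (rx z) (rx p) then Nd (Lf z) (Lf p) else Nd (Lf p) (Lf z)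
  | Nd l r => if Rle_dec (rx z) (rx (lastleaf l)) then bal (ins z l) r else bal l (ins z r)
  end.

Lemma ins_perm z t : Permutation (leaves (ins z t)) (z :: leaves t).
Proof.
  induction t; simpl.
  - destruct (Rle_dec _ _); simpl; auto. apply perm_swap.
  - destruct (Rle_dec _ _); rewrite bal_leaves.
    + change (z :: leaves t1 ++ leaves t2) with ((z :: leaves t1) ++ leaves t2).
      apply Permutation_app_tail; auto.
    + eapply perm_trans. apply Permutation_app_head; eauto.
      apply Permutation_sym, Permutation_middle.
Qed.

Lemma ins_ss z t : ss (leaves t) -> ss (leaves (ins z t)).
Proof.
  induction t; simpl; intros S.
  - destruct (Rle_dec _ _); simpl; repeat split; auto; intros b Hb; simpl in Hb; intuition; subst; lra.
  - pose proof (ss_app (leaves t1) (leaves t2)) as E. apply E in S. destruct S as (S1 & S2 & S3).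
    destruct (Rle_dec _ _) as [L|L]; rewrite bal_leaves; apply ss_app; repeat split; auto.
    + intros a b Ha Hb. apply (Permutation_in _ (ins_perm z t1)) in Ha. destruct Ha as [<-|Ha]; auto.
      eapply Rle_trans; [apply L|]. apply S3; auto. apply lastleaf_in.
    + intros a b Ha Hb. apply (Permutation_in _ (ins_perm z t2)) in Hb. destruct Hb as [<-|Hb]; auto.
      apply ss_last in Ha; auto. lra.
Qed.

Lemma ins_avl z t : avl t -> avl (ins z t) /\ (ht t <= ht (ins z t) <= S (ht t))%nat.
Proof.
  induction t; intros A.
  - simpl. destruct (Rle_dec _ _); simpl; rewrite ?ht_Nd, ?ht_Lf; repeat split; auto.
  - cbn [avl ins] in *. destruct A as (A1 & A2 & A3 & A4). rewrite ht_Nd.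
    destruct (Rle_dec _ _).
    + destruct (IHt1 A1) as [B1 B2].
      destruct (bal_avl (ins z t1) t2) as (C1 & C2 & C3); auto; try lia.
      split; auto.
      destruct (Nat.le_gt_cases (ht (ins z t1)) (S (ht t2))); [rewrite C3; lia|]. lia.
    + destruct (IHt2 A2) as [B1 B2].
      destruct (bal_avl t1 (ins z t2)) as (C1 & C2 & C3); auto; try lia.
      split; auto.
      destruct (Nat.le_gt_cases (ht (ins z t2)) (S (ht t1))); [rewrite C3; lia|]. lia.
Qed.

Lemma ins_ext z t : Ext (4 * S (ht t)) (M (ins z t)) (M t) /\ Ext (4 * S (ht t)) (M t) (M (ins z t)).
Proof.
  induction t.
  - simpl. destruct (Rle_dec _ _); simpl.
    + split; [exists [(p, ht (Nd (Lf z) (Lf p)))] | exists []]; split; simpl; try lia; inclsolve.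
    + split; [exists [(z, ht (Nd (Lf p) (Lf z)))] | exists []]; split; simpl; try lia; inclsolve.
  - cbn [ins]. rewrite ht_Nd. destruct (Rle_dec _ _).
    + destruct IHt1 as [I1 I2]. destruct (bal_ext (ins z t1) t2) as [B1 B2].
      split.
      * eapply Ext_weaken; [|eapply Ext_trans; [apply B1|]].
        2:{ eapply Ext_trans. apply (Ext_app _ 0 _ _ _ _ I1 (Ext_incl (M t2) (M t2) (incl_refl _))).
            apply Ext_incl. inclsolve. }
        lia.
      * eapply Ext_weaken; [|eapply Ext_trans; [|apply B2]].
        2:{ eapply Ext_trans. 
            instantiate (1 := M t1 ++ M t2). exists [(top t2, ht (Nd t1 t2))]. split; simpl; auto. inclsolve.
            apply (Ext_app _ 0 _ _ _ _ I2 (Ext_incl (M t2) (M t2) (incl_refl _))). }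
        lia.
    + destruct IHt2 as [I1 I2]. destruct (bal_ext t1 (ins z t2)) as [B1 B2].
      split.
      * eapply Ext_weaken; [|eapply Ext_trans; [apply B1|]].
        2:{ eapply Ext_trans. apply (Ext_app 0 _ _ _ _ _ (Ext_incl (M t1) (M t1) (incl_refl _)) I1).
            apply Ext_incl. inclsolve. }
        lia.
      * eapply Ext_weaken; [|eapply Ext_trans; [|apply B2]].
        2:{ eapply Ext_trans. 
            instantiate (1 := M t1 ++ M t2). exists [(top t2, ht (Nd t1 t2))]. split; simpl; auto. inclsolve.
            apply (Ext_app 0 _ _ _ _ _ (Ext_incl (M t1) (M t1) (incl_refl _)) I2). }
        lia.
Qed.

Fixpoint del (z : rect) (t : tr) : option tr :=
  match t with
  | Lf p => if rect_eq_dec z p then None else Some (Lf p)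
  | Nd l r => if in_dec rect_eq_dec z (leaves l) then
                match del z l with None => Some r | Some l' => Some (bal l' r) end
              else
                match del z r with None => Some l | Some r' => Some (bal l r') end
  end.

Lemma nodup_disj (l l' : list rect) a : NoDup (l ++ l') -> In a l -> ~ In a l'.
Proof.
  induction l; simpl; intros N H; [destruct H|]. inversion N; subst.
  destruct H as [<-|H]; auto. intros I. apply H2. rewrite in_app_iff; auto.
Qed.

Definition oleaves (o : option tr) := match o with None => [] | Some t => leaves t end.

Lemma del_leaves z t : NoDup (leaves t) -> oleaves (del z t) = remove rect_eq_dec z (leaves t).
Proof.
  induction t; simpl; intros N.
  - destruct (rect_eq_dec z p); simpl; destruct (rect_eq_dec z p); congruence.
  - apply NoDup_app_remove_l in N as N1. apply NoDup_app_remove_r in N as N2.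
    rewrite remove_app.
    destruct (in_dec rect_eq_dec z (leaves t1)) as [I|I].
    + assert (~ In z (leaves t2)) as I2.
      { eapply nodup_disj; eauto. }  
      rewrite (notin_remove _ _ _ I2). rewrite <- IHt1 by auto.
      destruct (del z t1); simpl; auto. now rewrite bal_leaves.
    + rewrite (notin_remove _ _ _ I). rewrite <- IHt2 by auto.
      destruct (del z t2); simpl; auto. now rewrite bal_leaves. now rewrite app_nil_r.
Qed.

Lemma del_None z t : del z t = None -> exists p, t = Lf p.
Proof.
  destruct t; simpl; eauto.
  destruct (in_dec _ _ _); [destruct (del z t1)| destruct (del z t2)]; discriminate.
Qed.

Lemma del_avl z t t' : avl t -> del z t = Some t' ->
  avl t' /\ (ht t' <= ht t)%nat /\ (ht t <= S (ht t'))%nat.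
Proof.
  revert t'. induction t; intros t' A D.
  - simpl in D. destruct (rect_eq_dec z p); inversion D; subst. simpl; auto.
  - cbn [avl del] in *. destruct A as (A1 & A2 & A3 & A4). rewrite ht_Nd.
    destruct (in_dec _ _ _).
    + destruct (del z t1) as [l'|] eqn:E.
      * inversion D; subst. destruct (IHt1 l' A1 eq_refl) as (B1 & B2 & B3).
        destruct (bal_avl l' t2) as (C1 & C2 & C3); auto; try lia.
        split; auto.
        destruct (Nat.le_gt_cases (ht t2) (S (ht l'))); [rewrite C3; lia|]. lia.
      * inversion D; subst. apply del_None in E. destruct E as [p ->]. rewrite ht_Lf in *.
        repeat split; auto; lia.
    + destruct (del z t2) as [r'|] eqn:E.
      * inversion D; subst. destruct (IHt2 r' A2 eq_refl) as (B1 & B2 & B3).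
        destruct (bal_avl t1 r') as (C1 & C2 & C3); auto; try lia.
        split; auto.
        destruct (Nat.le_gt_cases (ht t1) (S (ht r'))); [rewrite C3; lia|]. lia.
      * inversion D; subst. apply del_None in E. destruct E as [p ->]. rewrite ht_Lf in *.
        repeat split; auto; lia.
Qed.

Lemma del_ext z t t' : del z t = Some t' ->
  Ext (4 * S (ht t)) (M t') (M t) /\ Ext (4 * S (ht t)) (M t) (M t').
Proof.
  revert t'. induction t; intros t' D.
  - simpl in D. destruct (rect_eq_dec z p); inversion D; subst.
    split; apply Ext_weaken with 0%nat; try lia; apply Ext_incl; apply incl_refl.
  - cbn [del] in D. rewrite ht_Nd. destruct (in_dec _ _ _).
    + destruct (del z t1) as [l'|] eqn:E.
      * inversion D; subst. destruct (IHt1 l' eq_refl) as [I1 I2].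
        destruct (bal_ext l' t2) as [B1 B2]. split.
        -- eapply Ext_weaken; [|eapply Ext_trans; [apply B1|]].
           2:{ eapply Ext_trans. apply (Ext_app _ 0 _ _ _ _ I1 (Ext_incl (M t2) (M t2) (incl_refl _))).
               apply Ext_incl. inclsolve. }
           lia.
        -- eapply Ext_weaken; [|eapply Ext_trans; [|apply B2]].
           2:{ eapply Ext_trans.
               instantiate (1 := M t1 ++ M t2). exists [(top t2, ht (Nd t1 t2))]. split; simpl; auto. inclsolve.
               apply (Ext_app _ 0 _ _ _ _ I2 (Ext_incl (M t2) (M t2) (incl_refl _))). }
           lia.
      * inversion D; subst. apply del_None in E. destruct E as [p ->]. split.
        -- apply Ext_weaken with 0%nat; [lia|]. apply Ext_incl. inclsolve.
        -- exists [(top t', ht (Nd (Lf p) t'))]. split; simpl; [lia|]. inclsolve.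
    + destruct (del z t2) as [r'|] eqn:E.
      * inversion D; subst. destruct (IHt2 r' eq_refl) as [I1 I2].
        destruct (bal_ext t1 r') as [B1 B2]. split.
        -- eapply Ext_weaken; [|eapply Ext_trans; [apply B1|]].
           2:{ eapply Ext_trans. apply (Ext_app 0 _ _ _ _ _ (Ext_incl (M t1) (M t1) (incl_refl _)) I1).
               apply Ext_incl. inclsolve. }
           lia.
        -- eapply Ext_weaken; [|eapply Ext_trans; [|apply B2]].
           2:{ eapply Ext_trans.
               instantiate (1 := M t1 ++ M t2). exists [(top t2, ht (Nd t1 t2))]. split; simpl; auto. inclsolve.
               apply (Ext_app 0 _ _ _ _ _ (Ext_incl (M t1) (M t1) (incl_refl _)) I2). }
           lia.
      * inversion D; subst. apply del_None in E. destruct E as [p ->]. split.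
        -- apply Ext_weaken with 0%nat; [lia|]. apply Ext_incl. inclsolve.
        -- exists [(top (Lf p), ht (Nd t' (Lf p)))]. split; simpl; [lia|]. inclsolve.
Qed.

Lemma col_Nd_l l r b : NoDup (leaves (Nd l r)) -> In b (leaves l) -> col (Nd l r) b = col l b.
Proof.
  intros N H. simpl in N. cbn [col]. destruct (rect_eq_dec b (top r)).
  - subst. exfalso. eapply nodup_disj; eauto. apply top_in.
  - rewrite (col_notin r b); [lia|]. eapply nodup_disj; eauto.
Qed.

Lemma col_Nd_r l r b : NoDup (leaves (Nd l r)) -> In b (leaves r) -> b <> top r -> col (Nd l r) b = col r b.
Proof.
  intros N H H'. simpl in N. cbn [col]. destruct (rect_eq_dec b (top r)); [congruence|].
  rewrite (col_notin l b); [lia|]. intros Hl. eapply nodup_disj; eauto.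
Qed.

Lemma col_Nd_top l r : col (Nd l r) (top r) = ht (Nd l r).
Proof. cbn [col]. destruct (rect_eq_dec _ _); congruence. Qed.

Lemma col_Nd_lt l r b : NoDup (leaves (Nd l r)) -> In b (leaves (Nd l r)) -> b <> top r ->
  (col (Nd l r) b < ht (Nd l r))%nat.
Proof.
  intros N H H'. simpl in H. rewrite in_app_iff in H. rewrite ht_Nd. destruct H as [H|H].
  - rewrite col_Nd_l; auto. pose proof (col_le l b). lia.
  - rewrite col_Nd_r; auto. pose proof (col_le r b). lia.
Qed.

Lemma cf_tree t q : NoDup (leaves t) -> ss (leaves t) ->
  (exists a, In a (leaves t) /\ contains a q) ->
  exists a, In a (leaves t) /\ contains a q /\
    forall b, In b (leaves t) -> contains b q -> b <> a -> (col t b < col t a)%nat.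
Proof.
  induction t as [p|l IHl r IHr]; intros N S Ex.
  - destruct Ex as [a [Ha Hq]]. exists a. split; [exact Ha|]. split; [exact Hq|].
    intros b Hb _ Hne. simpl in Ha, Hb. destruct Ha as [<-|[]]; destruct Hb as [<-|[]]; congruence.
  - assert (N' := N). simpl in N'. pose proof (NoDup_app_remove_r _ _ N') as Nl.
    pose proof (NoDup_app_remove_l _ _ N') as Nr.
    simpl in S. apply ss_app in S. destruct S as (Sl & Sr & Slr).
    destruct (classic (contains (top r) q)) as [Ct|Ct].
    + exists (top r). split; [simpl; rewrite in_app_iff; right; apply top_in|]. split; auto.
      intros b Hb _ Hne. rewrite col_Nd_top. apply col_Nd_lt; auto.
    + destruct (classic (exists a, In a (leaves l) /\ contains a q)) as [El|El].
      * assert (Hnr : forall w, In w (leaves r) -> ~ contains w q).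
        { intros w Hw Cw. apply Ct. destruct El as [u [Hu Cu]].
          pose proof (Slr u (top r) Hu (top_in r)). pose proof (top_max r w Hw).
          unfold contains in *. lra. }
        destruct (IHl Nl Sl El) as [a [Ha [Ca Hmax]]].
        exists a. split; [simpl; rewrite in_app_iff; auto|]. split; auto.
        intros b Hb Cb Hne. simpl in Hb. rewrite in_app_iff in Hb. destruct Hb as [Hb|Hb].
        -- rewrite !col_Nd_l; auto.
        -- exfalso. eapply Hnr; eauto.
      * assert (Er : exists a, In a (leaves r) /\ contains a q).
        { destruct Ex as [a [Ha Ca]]. simpl in Ha. rewrite in_app_iff in Ha.
          destruct Ha as [Ha|Ha]; eauto. exfalso; eauto. }
        destruct (IHr Nr Sr Er) as [a [Ha [Ca Hmax]]].
        exists a. split; [simpl; rewrite in_app_iff; auto|]. split; auto.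
        assert (a <> top r) by (intros ->; auto).
        intros b Hb Cb Hne. simpl in Hb. rewrite in_app_iff in Hb. destruct Hb as [Hb|Hb].
        -- exfalso; eauto.
        -- assert (b <> top r) by (intros ->; auto).
           rewrite !col_Nd_r; auto.
Qed.

Lemma pow_step m : (2 ^ Nat.div2 (S m) <= 2 ^ Nat.div2 m + 2 ^ Nat.div2 (m - 1))%nat.
Proof.
  destruct m as [|k]; [simpl; lia|].
  replace (S k - 1)%nat with k by lia.
  change (Nat.div2 (S (S k))) with (S (Nat.div2 k)).
  assert (Nat.div2 k <= Nat.div2 (S k))%nat.
  { rewrite !Nat.div2_div. apply Nat.div_le_mono; lia. }
  assert (2 ^ Nat.div2 k <= 2 ^ Nat.div2 (S k))%nat by (apply Nat.pow_le_mono_r; lia).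
  rewrite Nat.pow_succ_r'. lia.
Qed.

Lemma pow_mono a b : (a <= b)%nat -> (2 ^ Nat.div2 a <= 2 ^ Nat.div2 b)%nat.
Proof.
  intros H. apply Nat.pow_le_mono_r; [lia|]. rewrite !Nat.div2_div. apply Nat.div_le_mono; lia.
Qed.

Lemma avl_size t : avl t -> (2 ^ Nat.div2 (ht t) <= length (leaves t))%nat.
Proof.
  induction t as [p|l IHl r IHr]; intros A.
  - rewrite ht_Lf. simpl. lia.
  - cbn [avl leaves] in *. destruct A as (A1 & A2 & A3 & A4). rewrite ht_Nd, length_app.
    specialize (IHl A1). specialize (IHr A2).
    destruct (Nat.max_spec (ht l) (ht r)) as [[B C]|[B C]]; rewrite C.
    + pose proof (pow_step (ht r)). pose proof (pow_mono (ht r - 1) (ht l) ltac:(lia)). lia.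
    + pose proof (pow_step (ht l)). pose proof (pow_mono (ht l - 1) (ht r) ltac:(lia)). lia.
Qed.

Lemma avl_ht t : avl t -> (ht t <= 2 * Nat.log2 (length (leaves t)) + 1)%nat.
Proof.
  intros A. pose proof (avl_size t A) as H.
  apply Nat.log2_le_mono in H. rewrite Nat.log2_pow2 in H by apply Nat.le_0_l.
  pose proof (Nat.div2_odd (ht t)). destruct (Nat.odd (ht t)); simpl in *; lia.
Qed.

Definition upd (o : option tr) (u : update) : option tr :=
  match u with
  | Ins z => Some (match o with None => Lf z | Some t => ins z t end)
  | Del z => match o with None => None | Some t => del z t end
  end.
Definition tree_of (h : list update) : option tr := fold_left upd h None.
Definition colof (o : option tr) : rect -> nat :=
  match o with None => fun _ => 0%nat | Some t => col t end.
Definition alg (h : list update) : rect -> nat := colof (tree_of h).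

Definition InvO (o : option tr) (S : list rect) : Prop :=
  match o with
  | None => S = []
  | Some t => avl t /\ ss (leaves t) /\ NoDup (leaves t) /\ (forall x, In x (leaves t) <-> In x S)
  end.

Lemma same_len (A B : list rect) : NoDup A -> NoDup B -> (forall x, In x A <-> In x B) -> length A = length B.
Proof.
  intros NA NB H. apply Nat.le_antisymm; apply NoDup_incl_length; auto; intros x; apply H.
Qed.

Lemma nodup_remove (x : rect) l : NoDup l -> NoDup (remove rect_eq_dec x l).
Proof.
  induction l; simpl; intros N; auto. inversion N; subst.
  destruct (rect_eq_dec x a); auto. constructor; auto.
  intros I. apply in_remove in I. tauto.
Qed.

Lemma len_remove (x : rect) l : NoDup l -> (length l <= S (length (remove rect_eq_dec x l)))%nat.
Proof.
  induction l; simpl; intros N; [lia|]. inversion N; subst.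
  destruct (rect_eq_dec x a).
  - subst. rewrite notin_remove; auto.
  - simpl. specialize (IHl H2). lia.
Qed.

Lemma nil_of_noelem (S : list rect) : (forall x, ~ In x S) -> S = [].
Proof. destruct S as [|a S]; auto. intros H. exfalso. apply (H a). left; auto. Qed.

Lemma tree_good t X : avl t -> ss (leaves t) -> NoDup (leaves t) -> (forall x, In x (leaves t) <-> In x X) ->
  NoDup X ->
  conflict_free X (col t) /\ (num_colors X (col t) <= S (ht t))%nat /\
  (ht t <= 2 * Nat.log2 (length X) + 1)%nat.
Proof.
  intros A Ss N E NS. split; [|split].
  - intros q [r [Hr Cr]]. apply E in Hr.
    destruct (cf_tree t q N Ss (ex_intro _ r (conj Hr Cr))) as [a [Ha [Ca Hm]]].
    exists a. split; [apply E; auto|]. split; auto.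
    intros r' Hr' Cr' Hne. apply E in Hr'. specialize (Hm r' Hr' Cr' Hne). lia.
  - unfold num_colors. rewrite <- (length_seq (S (ht t)) 0).
    apply NoDup_incl_length. apply NoDup_nodup.
    intros x Hx. apply nodup_In in Hx. apply in_map_iff in Hx. destruct Hx as [p [<- _]].
    apply in_seq. pose proof (col_le t p). lia.
  - rewrite <- (same_len _ _ N NS E). apply avl_ht; auto.
Qed.

Lemma recolor_bound (X X' : list rect) c c' (E : list (rect * nat)) : NoDup X ->
  (forall p, In p X -> In p X' -> c p <> c' p -> In p (map fst E)) ->
  (recolorings X X' c c' <= length E)%nat.
Proof.
  intros N H. unfold recolorings. rewrite <- (length_map fst E).
  apply NoDup_incl_length. apply NoDup_filter; auto.
  intros p Hp. apply filter_In in Hp. destruct Hp as [Hp Hf].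
  destruct (in_dec rect_eq_dec p X'); [|discriminate].
  apply H; auto. intros Heq. rewrite Heq, Nat.eqb_refl in Hf. discriminate.
Qed.

Lemma recolor_tree (X X' : list rect) t t' k1 k2 : NoDup X ->
  Ext k1 (M t') (M t) -> Ext k2 (M t) (M t') ->
  (recolorings X X' (col t) (col t') <= k1 + k2)%nat.
Proof.
  intros N [E1 [L1 I1]] [E2 [L2 I2]].
  eapply Nat.le_trans; [apply (recolor_bound _ _ _ _ (E1 ++ E2)); auto|].
  - intros p _ _ Hne. destruct (col_diff t t' p Hne) as [h [[A B]|[A B]]].
    + apply I2 in A. rewrite in_app_iff in A. destruct A as [A|A]; [|tauto].
      rewrite map_app, in_app_iff. right. apply in_map_iff. exists (p,h); auto.
    + apply I1 in A. rewrite in_app_iff in A. destruct A as [A|A]; [|tauto].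
      rewrite map_app, in_app_iff. left. apply in_map_iff. exists (p,h); auto.
  - rewrite length_app. lia.
Qed.

Lemma empty_good (X : list rect) c c' : conflict_free [] c' /\ num_colors [] c' = 0%nat /\
  recolorings X [] c c' = 0%nat.
Proof.
  split; [|split].
  - intros q [r [[] _]].
  - reflexivity.
  - unfold recolorings. induction X; simpl; auto.
Qed.

Lemma step_inv X o u : NoDup X -> InvO o X -> legal X u ->
  NoDup (step X u) /\ InvO (upd o u) (step X u).
Proof.
  intros N I L. destruct u as [z|z]; simpl in L |- *.
  - destruct L as [_ Nz]. split; [constructor; auto|].
    destruct o as [t|]; simpl in I |- *.
    + destruct I as (A & Ss & Nt & E). split; [apply ins_avl; auto|]. split; [apply ins_ss; auto|].
      split.
      * eapply Permutation_NoDup; [apply Permutation_sym, ins_perm|]. constructor; auto.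
        intros H; apply Nz, E, H.
      * intros x. split; intros H.
        -- apply (Permutation_in _ (ins_perm z t)) in H. simpl in H |- *. destruct H; auto. right; apply E; auto.
        -- apply (Permutation_in _ (Permutation_sym (ins_perm z t))). simpl in H |- *. destruct H; auto.
           right; apply E; auto.
    + subst. simpl. split; [exact I|split; [split; [intros ? []|exact I]|split; [repeat constructor; intros []|tauto]]].
  - split; [apply nodup_remove; auto|].
    destruct o as [t|]; simpl in I |- *; [|subst; destruct L].
    destruct I as (A & Ss & Nt & E).
    pose proof (del_leaves z t Nt) as DL.
    destruct (del z t) as [t'|] eqn:D; simpl in DL.
    + destruct (del_avl z t t' A D) as (A' & _ & _). split; auto.
      rewrite DL. split; [apply ss_remove; auto|]. split; [apply nodup_remove; auto|].
      intros x. split; intros H.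
      * apply in_remove in H. destruct H. apply in_in_remove; auto. apply E; auto.
      * apply in_remove in H. destruct H. apply in_in_remove; auto. apply E; auto.
    + apply nil_of_noelem. intros x H. apply in_remove in H. destruct H as [H1 H2].
      apply E in H1. assert (In x (remove rect_eq_dec z (leaves t))) by (apply in_in_remove; auto).
      rewrite <- DL in H. destruct H.
Qed.

Lemma step_bounds X o u : NoDup X -> InvO o X -> legal X u ->
  conflict_free (step X u) (colof (upd o u)) /\
  (num_colors (step X u) (colof (upd o u)) <= 32 * (Nat.log2 (length (step X u)) + 1))%nat /\
  (recolorings X (step X u) (colof o) (colof (upd o u)) <= 32 * (Nat.log2 (length (step X u)) + 1))%nat.
Proof.
  intros N I L. destruct (step_inv X o u N I L) as [N' I'].
  destruct (upd o u) as [t'|] eqn:U.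
  - simpl. destruct I' as (A' & X' & Nt' & E').
    destruct (tree_good t' (step X u) A' X' Nt' E' N') as (G1 & G2 & G3).
    split; auto. split; [lia|].
    destruct o as [t|].
    + simpl in I. destruct I as (A & Ss & Nt & E).
      assert (Hlen : length (leaves t) = length X) by (apply same_len; auto).
      pose proof (avl_ht t A) as Ht. rewrite Hlen in Ht.
      destruct u as [z|z]; simpl in U |- *.
      * inversion U; subst t'. destruct (ins_ext z t) as [X1 X2].
        eapply Nat.le_trans; [eapply recolor_tree; eauto|].
        assert (Nat.log2 (length X) <= Nat.log2 (S (length X)))%nat by (apply Nat.log2_le_mono; lia).
        simpl length in *. lia.
      * destruct (del_ext z t t' U) as [X1 X2].
        eapply Nat.le_trans; [eapply recolor_tree; eauto|].
        pose proof (len_remove z X N).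
        assert (Nat.log2 (length X) <= Nat.log2 (S (length (remove rect_eq_dec z X))))%nat by (apply Nat.log2_le_mono; lia).
        pose proof (Nat.log2_succ_le (length (remove rect_eq_dec z X))).
        simpl step in *. lia.
    + simpl in I. subst X. simpl colof. unfold recolorings. simpl. lia.
  - simpl. assert (step X u = []) as Hs by exact I'. rewrite Hs.
    destruct (empty_good X (colof o) (fun _ => 0%nat)) as (G1 & G2 & G3).
    rewrite G2, G3. split; auto. lia.
Qed.

Lemma hist_inv h : valid_hist h -> NoDup (cur h) /\ InvO (tree_of h) (cur h).
Proof.
  induction 1.
  - simpl. split; [constructor|reflexivity].
  - destruct IHvalid_hist as [N I].
    assert (E1 : cur (h ++ [u]) = step (cur h) u) by (unfold cur; rewrite fold_left_app; reflexivity).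
    assert (E2 : tree_of (h ++ [u]) = upd (tree_of h) u) by (unfold tree_of; rewrite fold_left_app; reflexivity).
    rewrite E1, E2. apply step_inv; auto.
Qed.

Theorem mainTheorem2 :
  exists (alg : list update -> rect -> nat) (c : nat),
    forall (h : list update) (u : update),
      valid_hist h -> legal (cur h) u ->
      let n := length (cur (h ++ [u])) in
      conflict_free (cur (h ++ [u])) (alg (h ++ [u])) /\
      (num_colors (cur (h ++ [u])) (alg (h ++ [u])) <= c * (Nat.log2 n + 1))%nat /\
      (recolorings (cur h) (cur (h ++ [u])) (alg h) (alg (h ++ [u]))
         <= c * (Nat.log2 n + 1))%nat.
Proof.
  exists alg, 32%nat. intros h u V L.
  destruct (hist_inv h V) as [N I].
  assert (E1 : cur (h ++ [u]) = step (cur h) u) by (unfold cur; rewrite fold_left_app; reflexivity).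
  assert (E2 : alg (h ++ [u]) = colof (upd (tree_of h) u)) by (unfold alg, tree_of; rewrite fold_left_app; reflexivity).
  cbv zeta. rewrite E1, E2. unfold alg at 1.
  apply step_bounds; auto.
Qed.
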